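(* For integers $n\ge1$ and $0\le p\le n-1$, $$s(n,n-p)=\frac{(n-1)!}{(n-p-1)!}\sum_{0\le k_1,\dots,k_p\le p}\binom{n+K-1}{K}\frac{K!}{k_1!\cdots k_p!}\,\delta_{p,\sum_{m=1}^p mk_m}\prod_{m=1}^{p}\left(\frac{-1}{(m+1)!}\right)^{k_m},\qquad K=k_1+\cdots+k_p .$$
   Context: $s(n,k)$ denotes the signed Stirling numbers of the first kind, defined by $x(x-1)\cdots(x-n+1)=\sum_{k}s(n,k)x^k$. $\delta$ is the Kronecker delta; for $p=0$ the sum is over the empty tuple and equals $1$. *)

(* Defs.v *)
From HB Require Import structures.
From mathcomp Require Import all_boot all_order all_algebra.
Set Implicit Arguments. Unset Strict Implicit. Unset Printing Implicit Defensive.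
Import Order.TTheory GRing.Theory Num.Theory.
Local Open Scope ring_scope.

Definition falling_poly (n : nat) : {poly int} := \prod_(i < n) ('X - (i%:R)%:P).
Definition stirling1 (n k : nat) : int := (falling_poly n)`_k.

(* Main.v *)
Require Import Defs.
From HB Require Import structures.
From mathcomp Require Import all_boot all_order all_algebra ring lra zify.
Import Order.TTheory GRing.Theory Num.Theory.
Local Open Scope ring_scope.

Definition av (j : nat) : rat := - ((j.+1)`!%:R)^-1.
Definition Ap (L : nat) : {poly rat} := \sum_(i < L) av i.+1 *: 'X^(i.+1).
Definition A1p (L : nat) : {poly rat} := \sum_(i < L) av i.+1 *: 'X^i.
Definition Rp (L m : nat) : {poly rat} :=
  \sum_(K < L.+1) ('C(m + K, K))%:R *: (Ap L) ^+ K.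

Lemma coefA L j : (Ap L)`_j = if (0 < j)%N && (j <= L)%N then av j else 0.
Proof.
elim: L j => [|L IH] j; first by rewrite /Ap big_ord0 coef0; case: j.
rewrite /Ap big_ord_recr /= coefD -/(Ap L) IH coefZ coefXn.
case: j => [|j] //=; first by rewrite mulr0 addr0.
rewrite !ltnS eqSS; case: (ltngtP j L) => h /=.
- by rewrite mulr0 addr0.
- by rewrite mulr0 addr0.
- by rewrite h add0r mulr1.
Qed.

Lemma A_X L : Ap L = A1p L * 'X.
Proof.
rewrite /Ap /A1p mulr_suml; apply: eq_bigr => i _.
by rewrite -scalerAl -exprSr.
Qed.

Lemma vanish L K q i : (i < K)%N -> (q * (Ap L) ^+ K)`_i = 0.
Proof.
move=> hi; rewrite A_X exprMn mulrA coefMXn hi //.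
Qed.

Lemma av_rec j : av j.+1 * (j.+2)%:R = av j.
Proof.
rewrite /av factS natrM mulNr; congr (- _).
rewrite invfM mulrAC mulVf ?mul1r // pnatr_eq0 //.
Qed.

Lemma R_succ L m : Rp L m.+1 =
  Rp L m + \sum_(i < L) ('C(m.+1 + i, i))%:R *: Ap L ^+ i.+1.
Proof.
rewrite /Rp !big_ord_recl /= !bin0 -addrA; congr (_ + _).
rewrite -big_split /=; apply: eq_bigr => i _.
rewrite -scalerDl -natrD; congr (_%:R *: _).
by rewrite /bump /= !add1n !addnS binS addSn.
Qed.

Lemma AR L m : Ap L * Rp L m =
  \sum_(i < L) ('C(m + i, i))%:R *: Ap L ^+ i.+1
  + ('C(m + L, L))%:R *: Ap L ^+ L.+1.
Proof.
rewrite /Rp mulr_sumr big_ord_recr /=; congr (_ + _).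
  by apply: eq_bigr => i _; rewrite -scalerAr exprS.
by rewrite -scalerAr exprS.
Qed.

Lemma R_step L m : Rp L m.+1 =
  Rp L m + Ap L * Rp L m.+1 - ('C(m.+1 + L, L))%:R *: Ap L ^+ L.+1.
Proof. by rewrite AR R_succ addrA addrK. Qed.

Lemma R_trunc L m : Rp L m - ('C(m + L, L))%:R *: Ap L ^+ L =
  \sum_(i < L) ('C(m + i, i))%:R *: Ap L ^+ i.
Proof. by rewrite /Rp big_ord_recr /= addrK. Qed.

Lemma R_deriv L m : (Rp L m)^`() =
  (m.+1)%:R *: (Ap L)^`() * (Rp L m.+1 - ('C(m.+1 + L, L))%:R *: Ap L ^+ L).
Proof.
rewrite R_trunc /Rp raddf_sum big_ord_recl /= derivZ expr0 derivC scaler0 add0r.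
rewrite mulr_sumr; apply: eq_bigr => i _.
rewrite derivZ deriv_exp /= add0n -scaler_nat scalerA.
rewrite -scalerAl -scalerAr scalerA; congr (_ *: _).
rewrite -!natrM; congr (_%:R).
by rewrite mulnC mul_bin_left /bump /= add1n addnS subSn ?leq_addl // addnK addSn.
Qed.

Lemma vanishX L K q i : (i <= K)%N -> (q * (Ap L) ^+ K * 'X)`_i = 0.
Proof.
move=> hi; rewrite A_X exprMn mulrA -mulrA -exprSr coefMXn ltnS hi //.
Qed.

Lemma r0 L m : (Rp L m)`_0 = 1.
Proof.
rewrite /Rp big_ord_recl /= addn0 bin0 scale1r expr0 coefD coef1 /=.
rewrite coef_sum big1 ?addr0 // => i _.
by rewrite coefZ -[Ap L ^+ _]mul1r vanish ?mulr0.
Qed.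

Lemma eqt_mul L (p q : {poly rat}) :
  (forall i, (i <= L)%N -> p`_i = q`_i) ->
  forall r i, (i <= L)%N -> (r * p)`_i = (r * q)`_i.
Proof.
move=> h r i hi; rewrite !coefM; apply: eq_bigr => j _.
by rewrite h // (leq_trans (leq_subr _ _) hi).
Qed.

Lemma ode L i : (i <= L)%N ->
  ('X * (Ap L)^`() + 1)`_i = ((1 - Ap L) * (1 - 'X))`_i.
Proof.
move=> hi; rewrite mulrBr mulr1 coefB coefMX coefD coefXM coef1 coef_deriv !coefB !coefA coef1.
case: i hi => [|i] hi /=; first by rewrite add0r !subr0.
rewrite coef1 hi addr0 sub0r.
case: i hi => [|i] hi /=.
  rewrite subr0 /av /= (_ : 2`! = 2)%N // mulr1n; field.
rewrite ifT; last by lia.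
rewrite sub0r -(av_rec i.+1) -mulr_natr -[i.+3]addn1 natrD; ring.
Qed.

Lemma target L m i : (i <= L)%N ->
  (Rp L m.+1 * ('X * (Ap L)^`() + 1))`_i = (Rp L m * (1 - 'X))`_i.
Proof.
move=> hi; rewrite (@eqt_mul L _ _ (@ode L) _ _ hi) mulrA [Rp L m.+1 * _]mulrC mulrBl mul1r.
by rewrite {1}R_step addrAC addrK mulrBl coefB -scalerAl coefZ [Ap L ^+ L.+1 * _]mulrC vanish ?mulr0 ?subr0.
Qed.

Lemma dterm L m i : (i <= L)%N ->
  ('X * (Rp L m)^`())`_i = (m.+1)%:R * (Rp L m.+1 * ('X * (Ap L)^`()))`_i.
Proof.
move=> hi; rewrite R_deriv -!mul_polyC.
set c := ('C(m.+1 + L, L))%:R.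
have -> : 'X * ((m.+1)%:R%:P * (Ap L)^`() * (Rp L m.+1 - c%:P * Ap L ^+ L)) =
  (m.+1)%:R%:P * (Rp L m.+1 * ('X * (Ap L)^`())) -
  ((m.+1)%:R * c)%:P * ((Ap L)^`() * Ap L ^+ L * 'X) by rewrite polyCM; ring.
by rewrite coefB !coefCM vanishX // mulr0 subr0.
Qed.

Lemma rrec L m p : (0 < p)%N -> (p <= L)%N ->
  (m.+1)%:R * (Rp L m.+1)`_p =
  (m.+1)%:R * ((Rp L m)`_p - (Rp L m)`_p.-1) - p%:R * (Rp L m)`_p.
Proof.
move=> p0 hp; have T := @target L m p hp; have D := @dterm L m p hp.
rewrite mulrDr mulr1 coefD mulrBr mulr1 coefB coefMX in T.
rewrite coefXM coef_deriv in D.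
case: p p0 hp T D => [|p] // _ hp /= T D.
have -> : (Rp L m.+1)`_p.+1 = (Rp L m)`_p.+1 - (Rp L m)`_p
   - (Rp L m.+1 * ('X * (Ap L)^`()))`_p.+1 by rewrite -T; ring.
rewrite mulrBr -D -mulr_natr; ring.
Qed.


Lemma fp_S n : falling_poly n.+1 = falling_poly n * ('X - (n%:R)%:P).
Proof. by rewrite /falling_poly big_ord_recr. Qed.

Lemma st_S n k : stirling1 n.+1 k.+1 = stirling1 n k - n%:R * stirling1 n k.+1.
Proof.
rewrite /stirling1 fp_S mulrBr coefB coefMX /=.
by rewrite coefMC mulrC.
Qed.

Lemma st_S0 n : stirling1 n.+1 0 = 0.
Proof.
rewrite /stirling1; elim: n => [|n IH].
  by rewrite fp_S mulrBr coefB coefMX /= coefMC mulr0 subrr.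
by rewrite fp_S mulrBr coefB coefMX /= coefMC IH mul0r subrr.
Qed.

Lemma st_big n k : (n < k)%N -> stirling1 n k = 0.
Proof.
elim: n k => [|n IH] [|k] //.
- by move=> _; rewrite /stirling1 /falling_poly big_ord0 coefC.
- by move=> hk; rewrite st_S !IH ?mulr0 ?subr0 // ltnW.
Qed.

Lemma st_nn n : stirling1 n n = 1.
Proof.
elim: n => [|n IH]; first by rewrite /stirling1 /falling_poly big_ord0 coefC.
by rewrite st_S IH st_big ?mulr0 ?subr0.
Qed.

Lemma main_ind L m p : (p <= L)%N -> (p <= m.+1)%N ->
  ((stirling1 m.+1 (m.+1 - p))%:~R : rat) = (m ^_ p)%:R * (Rp L m)`_p.
Proof.
elim: m p => [|m IH] p hL hm.
  case: p hL hm => [|[|p]] // hL _.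
    by rewrite subn0 st_nn r0 ffactn0 mulr1.
  by rewrite subnn st_S0 ffact_small // mul0r.
case: p hL hm => [|p] hL hm.
  by rewrite subn0 st_nn r0 ffactn0 mulr1.
case: (ltngtP p m.+1) => hp; last first.
- by rewrite hp subnn st_S0 ffact_small // mul0r.
- by move: hm; rewrite ltnS leqNgt hp.
have hpm : (p <= m)%N by [].
have -> : (m.+2 - p.+1 = (m - p).+1)%N by lia.
rewrite st_S.
have E1 := IH p.+1 hL hp.
have E2 := IH p (ltnW hL) (ltnW hp).
have e1 : (m.+1 - p.+1 = m - p)%N by lia.
have e2 : (m.+1 - p = (m - p).+1)%N by lia.
rewrite e1 in E1; rewrite e2 in E2.
rewrite intrB intrM E1 E2.
rewrite ffactSS natrM rmorph_nat.
have R := @rrec L m p.+1 isT hL.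
transitivity ((m ^_ p)%:R * ((m.+1)%:R * (Rp L m.+1)`_p.+1)); last by ring.
rewrite R ffactnSr natrM natrB //= -[p.+1]addn1 -[m.+1]addn1 !natrD; ring.
Qed.

Definition ifc (j : nat) : rat := ((j`!)%:R)^-1.

Definition Tz (N : nat) (x : {poly rat}) : {poly {poly rat}} :=
  \poly_(j < N) (ifc j *: x ^+ j).

Lemma Tprod p N (x : 'I_p -> {poly rat}) :
  \prod_(i < p) Tz N (x i) =
  \sum_(k : {ffun 'I_p -> 'I_N})
     ((\prod_(i < p) ifc (k i)) *: \prod_(i < p) x i ^+ (k i))
       *: 'X^(\sum_(i < p) (k i : nat)).
Proof.
rewrite /Tz; under eq_bigr do rewrite poly_def.
rewrite bigA_distr_bigA /=; apply: eq_bigr => k _.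
rewrite scaler_prod prodrXr; congr (_ *: _).
by rewrite -scaler_prod; apply: eq_bigr.
Qed.

Lemma ifc_bin K j : (j <= K)%N ->
  ifc K * ('C(K, j))%:R = ifc j * ifc (K - j).
Proof.
move=> hj; rewrite /ifc -(bin_fact hj) !natrM.
have h1 : ((j`!)%:R : rat) != 0 by rewrite pnatr_eq0 -lt0n fact_gt0.
have h2 : (((K - j)`!)%:R : rat) != 0 by rewrite pnatr_eq0 -lt0n fact_gt0.
have h3 : (('C(K, j))%:R : rat) != 0 by rewrite pnatr_eq0 -lt0n bin_gt0.
field; rewrite h1 h2 h3 //.
Qed.

Lemma Tcoef p N (x : 'I_p -> {poly rat}) K : (K < N)%N ->
  (\prod_(i < p) Tz N (x i))`_K = ifc K *: (\sum_(i < p) x i) ^+ K.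
Proof.
elim: p x K => [|p IH] x K hK.
  rewrite !big_ord0 coef1; case: K hK => [|K] _ /=.
    by rewrite expr0 /ifc scale1r.
  by rewrite expr0n scaler0.
rewrite big_ord_recr big_ord_recr /= coefM.
rewrite addrC exprDn scaler_sumr; apply: eq_bigr => j _.
have hj : (j <= K)%N by rewrite -ltnS.
rewrite IH; last by apply: leq_ltn_trans hK.
rewrite /Tz coef_poly ifT; last by apply: leq_ltn_trans (leq_subr _ _) hK.
rewrite -scalerAl -scalerAr scalerA -scaler_nat scalerA.
rewrite mulrC ifc_bin // mulrC; congr (_ *: _).
by rewrite mulrC.
Qed.

Lemma ML p N (x : 'I_p -> {poly rat}) K : (K < N)%N ->
  \sum_(k : {ffun 'I_p -> 'I_N})
    (if (\sum_(i < p) (k i : nat))%N == K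
     then (\prod_(i < p) ifc (k i)) *: \prod_(i < p) x i ^+ (k i) else 0)
  = ifc K *: (\sum_(i < p) x i) ^+ K.
Proof.
move=> hK; rewrite -(@Tcoef p N) // Tprod coef_sum; apply: eq_bigr => k _.
rewrite coefZ coefXn eq_sym; case: eqP => _; by rewrite ?mulr1 ?mulr0.
Qed.

Lemma prodx p (k : {ffun 'I_p -> 'I_p.+1}) :
  (\prod_(i < p) (av i.+1 *: 'X^(i.+1)) ^+ (k i))`_p =
  (if p == (\sum_(i < p) (i.+1 * k i))%N then 1 else 0) * \prod_(i < p) av i.+1 ^+ (k i).
Proof.
under eq_bigr do rewrite exprZn -exprM.
rewrite scaler_prod prodrXr coefZ coefXn mulrC.
by case: eqP.
Qed.

Lemma sum_conn m p :
  (Rp p m)`_p =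
  \sum_(k : {ffun 'I_p -> 'I_p.+1})
     let K := (\sum_(i < p) (k i : nat))%N in
     ('C(m.+1 + K - 1, K))%:R
     * ((K`!)%:R / (\prod_(i < p) ((k i : nat)`!))%:R)
     * (if p == (\sum_(i < p) (i.+1 * k i))%N then 1 else 0)
     * \prod_(i < p) ((-1) / ((i.+2)`!)%:R) ^+ (k i : nat).
Proof.
rewrite /Rp coef_sum.
transitivity (\sum_(K < p.+1) \sum_(k : {ffun 'I_p -> 'I_p.+1})
   (if (\sum_(i < p) (k i : nat))%N == K then
      ('C(m + K, K))%:R * (K`!)%:R *
      ((\prod_(i < p) ifc (k i)) *: \prod_(i < p) (av i.+1 *: 'X^(i.+1)) ^+ (k i))`_p
    else 0)).
  apply: eq_bigr => K _.
  have e : ((Ap p ^+ K)`_p) = (K`!)%:R * (ifc K *: Ap p ^+ K)`_p.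
    rewrite coefZ mulrA /ifc mulfV ?mul1r // pnatr_eq0 -lt0n fact_gt0 //.
  rewrite coefZ e -(@ML p p.+1) // coef_sum mulrA mulr_sumr; apply: eq_bigr => k _.
  by case: eqP => _; rewrite ?coef0 ?mulr0.
rewrite exchange_big /=; apply: eq_bigr => k _.
rewrite -big_mkcond /=.
rewrite (eq_bigl (fun K : 'I_p.+1 => (K : nat) == (\sum_(i < p) (k i : nat))%N)); last first.
  by move=> K; rewrite eq_sym.
rewrite (big_ord1_eq _ (fun K => ('C(m + K, K))%:R * (K`!)%:R *
      ((\prod_(i < p) ifc (k i)) *: \prod_(i < p) (av i.+1 *: 'X^(i.+1)) ^+ (k i))`_p)).
set K := (\sum_(i < p) (k i : nat))%N.
have eC : (m.+1 + K - 1 = m + K)%N by lia.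
have eP : \prod_(i < p) ((-1) / ((i.+2)`!)%:R) ^+ (k i : nat) =
   \prod_(i < p) av i.+1 ^+ (k i) by apply: eq_bigr => i _; rewrite /av mulN1r.
have eF : (K`!)%:R / (\prod_(i < p) ((k i : nat)`!))%:R =
   (K`!)%:R * \prod_(i < p) ifc (k i) :> rat by rewrite natr_prod prodfV.
rewrite eC eP eF; case: ifP => hK.
  rewrite coefZ prodx.
  set b := (if _ then _ else _); set P1 := \prod_(i < p) ifc _; set P2 := \prod_(i < p) _ ^+ _.
  ring.
have hle : (K <= \sum_(i < p) (i.+1 * k i))%N.
  by apply: leq_sum => i _; apply: leq_pmull.
rewrite ifF ?mulr0 ?mul0r //; apply: negbTE; apply/eqP => E.
move: hK hle; rewrite -E; lia.
Qed.

Theorem mainTheorem6 (n p : nat) (hn : (1 <= n)%N) (hp : (p <= n - 1)%N) :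
  ((stirling1 n (n - p))%:~R : rat) =
  ((n - 1)`!)%:R / ((n - p - 1)`!)%:R *
  \sum_(k : {ffun 'I_p -> 'I_p.+1})
     let K := (\sum_(i < p) (k i : nat))%N in
     ('C(n + K - 1, K))%:R
     * ((K`!)%:R / (\prod_(i < p) ((k i : nat)`!))%:R)
     * (if p == (\sum_(i < p) (i.+1 * k i))%N then 1 else 0)
     * \prod_(i < p) ((-1) / ((i.+2)`!)%:R) ^+ (k i : nat).
Proof.
case: n hn hp => [|m] // _ hp.
have hpm : (p <= m)%N by move: hp; rewrite subn1.
rewrite (@main_ind p m p) //; last by apply: leq_trans hpm _.
have e1 : (m.+1 - 1 = m)%N by lia.
have e2 : (m.+1 - p - 1 = m - p)%N by lia.
rewrite e1 e2 -sum_conn; congr (_ * _).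
rewrite -(ffact_fact hpm) natrM mulfK // pnatr_eq0 -lt0n fact_gt0 //.
Qed.
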